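(* Under algorithm ERGO with $\kappa\le1/18$ and $\epsilon<1/12$, for every iteration $i\ge0$, $B_i\le N_i/(18(1-\epsilon))$, where $B_i$ and $N_i$ denote respectively the number of bad IDs and the total number of IDs in the system at the end of iteration $i$.
   Context: Resource model. IDs are good (follow the protocol) or bad (controlled by a single adversary). A $k$-hard challenge imposes a cost $k$ on its solver. A round is the time to solve a $1$-hard challenge plus communication with the server. In any single round in which all IDs are solving challenges, the adversary can solve at most a $\kappa$-fraction of the challenges. In any round, at most an $\epsilon$-fraction of the good IDs depart. Joins and departures occur at distinct times; every joining ID is new. ERGO (run by a server, with GoodJEst running in parallel and providing a current estimate $\tilde J$ of the good join rate): initially, the system consists of the IDs that returned a valid solution to a $1$-hard challenge (this is the end of iteration $0$). Each subsequent iteration starts at some time $\tau$ with system $S(\tau)$; during it, every joining ID must solve a challenge of hardness $1$ plus the number of IDs that joined in the last $1/\tilde J$ seconds of the current iteration (the entrance cost). When the number of joining plus departing IDs in the iteration exceeds $|S(\tau)|/11$, a purge is performed: all IDs are issued a $1$-hard challenge, the system is reset to the IDs that solve it within one round, and the next iteration begins. *)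

(* Defs.v *)
From HB Require Import structures.
From mathcomp Require Import all_boot all_order all_algebra.
From mathcomp Require Import finmap.
Set Implicit Arguments. Unset Strict Implicit. Unset Printing Implicit Defensive.
Import Order.TTheory GRing.Theory Num.Theory.
Local Open Scope fset_scope.
Local Open Scope ring_scope.

(* IDs live in a type [ID]; [good x] says that ID x is good (follows the
   protocol); the others are bad (controlled by the single adversary). *)
Definition good_ids {ID : choiceType} (good : pred ID) (A : {fset ID}) :=
  [fset x in A | good x].
Definition bad_ids {ID : choiceType} (good : pred ID) (A : {fset ID}) :=
  [fset x in A | ~~ good x].

(* The round that ends an iteration of ERGO (the initial 1-hard challenge
   for iteration 0, the purge for iteration i >= 1):
   - P : the IDs that are issued a 1-hard challenge in that round
         (the system / initial joiners when the round starts);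
   - D : the IDs that depart during that round;
   - S : the IDs that return a valid solution within the round, i.e. the
         system at the end of the iteration.
   Constraints from the model:
   - the system is reset to IDs that solved: S is contained in P and
     departed IDs are not in the system;
   - good IDs follow the protocol: every good ID of P that does not depart
     solves its 1-hard challenge within the round;
   - at most an eps-fraction of the good IDs depart in the round;
   - all IDs are solving challenges in that round, so the adversary solves
     at most a kappa-fraction of the challenges solved in it, namely of the
     challenges of the good IDs plus those solved by the adversary. *)
Definition ergo_end_round {R : numDomainType} {ID : choiceType}
    (good : pred ID) (kappa eps : R) (P D S : {fset ID}) : Prop :=
  [/\ S `<=` P,
      S `&` D = fset0,
      (forall x, x \in P -> good x -> x \notin D -> x \in S),
      (#|` good_ids good (P `&` D)|%:R <= eps * #|` good_ids good P|%:R) &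
      (#|` bad_ids good S|%:R
         <= kappa * (#|` good_ids good P|%:R + #|` bad_ids good S|%:R))].

Definition N_ids {ID : choiceType} (S : {fset ID}) : nat := #|` S|.
Definition B_ids {ID : choiceType} (good : pred ID) (S : {fset ID}) : nat :=
  #|` bad_ids good S|.

(* Main.v *)
Require Import Defs.
From HB Require Import structures.
From mathcomp Require Import all_boot all_order all_algebra.
From mathcomp Require Import finmap.
From mathcomp Require Import lra.
Import Order.TTheory GRing.Theory Num.Theory.
Local Open Scope fset_scope.
Local Open Scope ring_scope.

Lemma split_card (ID : choiceType) (good : pred ID) (A : {fset ID}) :
  #|` A| = (#|` good_ids good A| + #|` bad_ids good A|)%N.
Proof.
have U : good_ids good A `|` bad_ids good A = A.
  apply/fsetP => x; rewrite !inE; by case: (x \in A); case: (good x).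
have I : good_ids good A `&` bad_ids good A = fset0.
  apply/fsetP => x; rewrite !inE; by case: (x \in A); case: (good x).
by rewrite -(cardfsUI (good_ids good A)) U I cardfs0 addn0.
Qed.

Lemma good_bound (ID : choiceType) (good : pred ID) (P D S : {fset ID}) :
  (forall x, x \in P -> good x -> x \notin D -> x \in S) ->
  (#|` good_ids good P| <= #|` good_ids good S| + #|` good_ids good (P `&` D)|)%N.
Proof.
move=> H.
have sub : good_ids good P `<=` good_ids good S `|` good_ids good (P `&` D).
  apply/fsubsetP => x; rewrite !inE => /andP[xP gx].
  case xD: (x \in D); first by rewrite xP gx orbT.
  by rewrite (H x xP gx) ?xD // gx.
apply: leq_trans (fsubset_leq_card sub) _.
by rewrite -cardfsUI leq_addr.
Qed.

Theorem lemma8 (R : realFieldType) (ID : choiceType) (good : pred ID)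
    (kappa eps : R) (P D S : nat -> {fset ID}) :
  0 <= kappa -> kappa <= 1 / 18 -> 0 <= eps -> eps < 1 / 12 ->
  (forall i : nat, ergo_end_round good kappa eps (P i) (D i) (S i)) ->
  forall i : nat,
    (B_ids good (S i))%:R <= (N_ids (S i))%:R / (18 * (1 - eps)).
Proof.
move=> k0 k1 e0 e1 H i.
have [_ _ Hs Hd Hk] := H i.
have hb := (@good_bound ID good (P i) (D i) (S i) Hs).
rewrite /B_ids /N_ids (@split_card ID good (S i)).
move: hb Hd Hk.
set g := #|` good_ids good (P i)|.
set gs := #|` good_ids good (S i)|.
set gd := #|` good_ids good (P i `&` D i)|.
set b := #|` bad_ids good (S i)|.
move=> hb Hd Hk.
have hb' : g%:R <= gs%:R + gd%:R :> R by rewrite -natrD ler_nat.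
rewrite natrD.
have pos : 0 < 18 * (1 - eps) :> R by lra.
rewrite ler_pdivlMr //.
have g0 : 0 <= g%:R :> R by [].
have b0 : 0 <= b%:R :> R by [].
have h17 : 17 * b%:R <= g%:R :> R.
  nra.
nra.
Qed.
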